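(* For every sufficiently large $n$ there is a tensor $T\in\mathbb{C}^{n\times n\times n}$ with $T\notin\overline{\mathrm{OT}_n(\mathbb{C})}$ such that, for each of its three families of slices (the $x$-, $y$- and $z$-slices), denoted $M_1,\dots,M_n$, and for each of the two families of $n^2$ matrices $\{M_k^TM_l\}_{k,l}$ and $\{M_kM_l^T\}_{k,l}$, the following hold: (i) the matrices of the family are symmetric and pairwise commute; (ii) the subalgebra of $M_n(\mathbb{C})$ generated by the matrices of the family and the identity matrix has dimension at most $n$; (iii) the centralizer of the matrices of the family has dimension at least $n$.
   Context: Associate to $T$ the trilinear form $t=\sum_{i,j,k}T_{ijk}x_iy_jz_k$. $\mathrm{OT}_n(\mathbb{C})$ is the set of tensors whose trilinear form can be written $g(Ax,By,Cz)$ with $A,B,C\in M_n(\mathbb{C})$ satisfying $A^TA=B^TB=C^TC=\mathrm{Id}$ and $g=\sum_{i=1}^n\alpha_ix_iy_iz_i$; closure is in the Euclidean topology. Slices: $X_k=(T_{kjl})_{j,l}$, $Y_k=(T_{ikl})_{i,l}$, $Z_k=(T_{ijk})_{i,j}$. The centralizer of a set of matrices is the set of $M\in M_n(\mathbb{C})$ commuting with all of them. *)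

(* Defs.v *)
From HB Require Import structures.
From mathcomp Require Import all_boot all_order all_algebra all_field.
Set Implicit Arguments. Unset Strict Implicit. Unset Printing Implicit Defensive.
Import Order.TTheory GRing.Theory Num.Theory.
Local Open Scope ring_scope.

(* The complex numbers: a numeric closed field whose real elements are
   Dedekind-complete (least-upper-bound property).  Any such field is
   isomorphic, as a normed / partially ordered field, to C. *)
Definition real_complete (C : numClosedFieldType) : Prop :=
  forall S : C -> Prop,
    (forall x, S x -> x \is Num.real) ->
    (exists x, S x) ->
    (exists M, forall x, S x -> x <= M) ->
    exists s, (forall x, S x -> x <= s) /\
              (forall M, (forall x, S x -> x <= M) -> s <= M).

Definition tensor (C : numClosedFieldType) (n : nat) := 'I_n -> 'I_n -> 'I_n -> C.

Definition orthogonal_mx (C : numClosedFieldType) (n : nat) (A : 'M[C]_n) : Prop :=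
  A^T *m A = 1%:M.

(* T in OT_n : its trilinear form equals g(Ax,By,Cz) with g = sum_r alpha_r x_r y_r z_r,
   i.e. (comparing coefficients of x_i y_j z_k)
   T_{ijk} = sum_r alpha_r A_{ri} B_{rj} C_{rk}. *)
Definition OT (C : numClosedFieldType) (n : nat) (T : tensor C n) : Prop :=
  exists (A B D : 'M[C]_n) (alpha : 'I_n -> C),
    [/\ orthogonal_mx A, orthogonal_mx B, orthogonal_mx D &
        forall i j k, T i j k = \sum_(r < n) alpha r * A r i * B r j * D r k].

(* Closure in the Euclidean topology of C^{n^3} (via the equivalent sup norm). *)
Definition in_closure (C : numClosedFieldType) (n : nat)
    (S : tensor C n -> Prop) (T : tensor C n) : Prop :=
  forall eps : C, 0 < eps ->
    exists T' : tensor C n, S T' /\ forall i j k, `|T i j k - T' i j k| < eps.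

Definition xslice (C : numClosedFieldType) (n : nat) (T : tensor C n) (k : 'I_n) : 'M[C]_n :=
  \matrix_(j, l) T k j l.
Definition yslice (C : numClosedFieldType) (n : nat) (T : tensor C n) (k : 'I_n) : 'M[C]_n :=
  \matrix_(i, l) T i k l.
Definition zslice (C : numClosedFieldType) (n : nat) (T : tensor C n) (k : 'I_n) : 'M[C]_n :=
  \matrix_(i, j) T i j k.

Definition famTM (C : numClosedFieldType) (n : nat) (M : 'I_n -> 'M[C]_n) : seq 'M[C]_n :=
  [seq (M k)^T *m M l | k <- enum 'I_n, l <- enum 'I_n].
Definition famMT (C : numClosedFieldType) (n : nat) (M : 'I_n -> 'M[C]_n) : seq 'M[C]_n :=
  [seq M k *m (M l)^T | k <- enum 'I_n, l <- enum 'I_n].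

(* Properties (i)-(iii) for a family of (n+1)x(n+1) matrices.
   agenv V = subalgebra generated by the subspace V (contains 1);
   centraliser_vspace V = centralizer of V (= centralizer of the family). *)
Definition good_family (C : numClosedFieldType) (n : nat) (F : seq 'M[C]_n.+1) : Prop :=
  [/\ (forall A, A \in F -> A^T = A),
      (forall A B, A \in F -> B \in F -> A *m B = B *m A),
      (\dim (agenv (<<F>>%VS)) <= n.+1)%N &
      (n.+1 <= \dim (centraliser_vspace (<<F>>%VS)))%N].

Definition good_slices (C : numClosedFieldType) (n : nat) (M : 'I_n.+1 -> 'M[C]_n.+1) : Prop :=
  good_family (famTM M) /\ good_family (famMT M).

(* Main.v *)
Require Import Defs.
From HB Require Import structures.
From mathcomp Require Import all_boot all_order all_algebra all_field.
From mathcomp Require Import ring zify.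
Import Order.TTheory GRing.Theory Num.Theory.
Local Open Scope ring_scope.

Section Fam.
Variable C : numClosedFieldType.
Variable n : nat.

Lemma good_zero (F : seq 'M[C]_n.+1) : (forall A, A \in F -> A = 0) -> good_family F.
Proof.
move=> HF.
have spanF : (<<F>> = 0)%VS.
  apply/eqP; rewrite -subv0; apply/span_subvP => A /HF ->; exact: mem0v.
split.
- by move=> A /HF ->; rewrite trmx0.
- by move=> A B /HF -> /HF ->; rewrite !mul0mx.
- rewrite spanF.
  have: (agenv (0 : {vspace 'M[C]_n.+1}) <= 1)%VS.
    by apply: agenv_sub_modl; rewrite ?subvv // prod0v sub0v.
  move/dimvS; rewrite dimv1 => h; exact: leq_trans h _.
- rewrite spanF.
  have: (fullv <= centraliser_vspace (0 : {vspace 'M[C]_n.+1}))%VS.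
    by apply/centvsP => u v _; rewrite memv0 => /eqP ->; rewrite mulr0 mul0r.
  move/dimvS; rewrite dimvf /= => h; apply: leq_trans h.
  by rewrite /dim /= leq_pmulr.
Qed.
End Fam.

Section Slice.
Variable C : numClosedFieldType.
Variable N0 : nat.
Variable Q : finType.

Lemma slice_TM (M : 'I_N0 -> 'M[C]_N0) (c : Q -> C) (F G H : Q -> 'I_N0 -> C) :
  (forall k j l, M k j l = \sum_q c q * F q k * G q j * H q l) ->
  (forall q q', \sum_j G q j * G q' j = 0) ->
  forall k l, (M k)^T *m M l = 0.
Proof.
move=> HM HG k l; apply/matrixP => x y; rewrite !mxE.
under eq_bigr => j _ do rewrite mxE !HM big_distrlr /=.
rewrite exchange_big /= big1 // => q _; rewrite exchange_big /= big1 // => q' _.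
apply: (@etrans _ _ ((c q * F q k * H q x * (c q' * F q' l * H q' y)) * \sum_j G q j * G q' j)).
  by rewrite mulr_sumr; apply: eq_bigr => j _; ring.
by rewrite HG mulr0.
Qed.

Lemma slice_MT (M : 'I_N0 -> 'M[C]_N0) (c : Q -> C) (F G H : Q -> 'I_N0 -> C) :
  (forall k j l, M k j l = \sum_q c q * F q k * G q j * H q l) ->
  (forall q q', \sum_j H q j * H q' j = 0) ->
  forall k l, M k *m (M l)^T = 0.
Proof.
move=> HM HG k l; apply/matrixP => x y; rewrite !mxE.
under eq_bigr => j _ do rewrite mxE !HM big_distrlr /=.
rewrite exchange_big /= big1 // => q _; rewrite exchange_big /= big1 // => q' _.
apply: (@etrans _ _ ((c q * F q k * G q x * (c q' * F q' l * G q' y)) * \sum_j H q j * H q' j)).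
  by rewrite mulr_sumr; apply: eq_bigr => j _; ring.
by rewrite HG mulr0.
Qed.

Lemma good_slices_of (M : 'I_N0.+1 -> 'M[C]_N0.+1) :
  (forall k l, (M k)^T *m M l = 0) -> (forall k l, M k *m (M l)^T = 0) ->
  good_slices M.
Abort.
End Slice.

Section Iso.
Variable C : numClosedFieldType.
Variables N0 m : nat.
Hypothesis hm : (m + m <= N0)%N.

Definition uvec (a : 'I_m) (i : 'I_N0) : C :=
  ((i : nat) == a)%:R + 'i * ((i : nat) == m + a)%:R.

Lemma sum_eqeq (k l : nat) : (k < N0)%N ->
  \sum_(i < N0) ((((i:nat) == k)%:R * ((i:nat) == l)%:R) : C) = (k == l)%:R.
Proof.
move=> hk; rewrite (bigD1 (Ordinal hk)) //= big1 ?addr0 ?eqxx ?mul1r //.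
move=> i /eqP hi; have : (i : nat) != k by apply/eqP => e; apply: hi; apply: val_inj.
by move/negbTE => ->; rewrite mul0r.
Qed.

Lemma cross0 (a b : 'I_m) (i : 'I_N0) :
  ((((i:nat) == a)%:R * ((i:nat) == m + b)%:R) : C) = 0.
Proof.
case: eqP => [ea|]; last by rewrite mul0r.
case: eqP => [eb|]; last by rewrite mulr0.
by exfalso; have := ltn_ord a; lia.
Qed.

Lemma uvec_iso (a b : 'I_m) : \sum_i uvec a i * uvec b i = 0.
Proof.
have ha : (a < N0)%N by apply: leq_trans (ltn_ord a) _; apply: leq_trans hm; apply: leq_addr.
have hb : (m + a < N0)%N by apply: leq_trans hm; rewrite ltn_add2l.
rewrite (eq_bigr (fun i : 'I_N0 => (((i:nat) == a)%:R * ((i:nat) == b)%:R)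
      - (((i:nat) == m + a)%:R * ((i:nat) == m + b)%:R))); last first.
  move=> i _; rewrite /uvec.
  have h1 := cross0 a b i; have h2 := cross0 b a i.
  have hi : 'i * 'i = -1 :> C by rewrite -expr2 sqrCi.
  transitivity ((((i:nat) == a)%:R * ((i:nat) == b)%:R)
      + 'i * ((((i:nat) == a)%:R * ((i:nat) == m + b)%:R))
      + 'i * ((((i:nat) == b)%:R * ((i:nat) == m + a)%:R))
      + ('i * 'i) * (((i:nat) == m + a)%:R * ((i:nat) == m + b)%:R) : C); first ring.
  by rewrite h1 h2 hi !mulr0 !addr0 mulN1r.
rewrite sumrB !sum_eqeq // eqn_add2l; exact: subrr.
Qed.
End Iso.

Section Cont.
Variable C : numClosedFieldType.
Variable X : Type.
Variable t : X -> C.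

Definition cont_at (f : (X -> C) -> C) :=
  forall e : C, 0 < e -> exists2 d : C, 0 < d &
    forall x, (forall v, `|x v - t v| < d) -> `|f x - f t| < e.

Lemma pos_min (d1 d2 : C) : 0 < d1 -> 0 < d2 ->
  exists2 d, 0 < d & d <= d1 /\ d <= d2.
Proof.
move=> h1 h2; have /orP[le|le] := real_leVge (gtr0_real h1) (gtr0_real h2).
  by exists d1.
by exists d2.
Qed.
Arguments pos_min [d1 d2].

Lemma cont_const a : cont_at (fun _ => a).
Proof. by move=> e he; exists 1 => // x _; rewrite subrr normr0. Qed.

Lemma cont_proj v : cont_at (fun x => x v).
Proof. by move=> e he; exists e. Qed.

Lemma cont_add {f g} : cont_at f -> cont_at g -> cont_at (fun x => f x + g x).
Proof.
move=> cf cg e he.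
have he2 : 0 < e / 2%:R by rewrite divr_gt0 ?ltr0n.
have [d1 hd1 Hf] := cf _ he2; have [d2 hd2 Hg] := cg _ he2.
have [d hd [l1 l2]] := pos_min hd1 hd2.
exists d => // x hx.
have -> : f x + g x - (f t + g t) = (f x - f t) + (g x - g t) by ring.
apply: le_lt_trans (ler_normD _ _) _; rewrite [e]splitr; apply: ltrD.
  by apply: Hf => v; apply: lt_le_trans (hx v) l1.
by apply: Hg => v; apply: lt_le_trans (hx v) l2.
Qed.

Lemma cont_mul {f g} : cont_at f -> cont_at g -> cont_at (fun x => f x * g x).
Proof.
move=> cf cg e he.
set Bf := `|f t| + 1; set Bg := `|g t| + 1.
have hBf : 0 < Bf by rewrite /Bf ltr_wpDl.
have hBg : 0 < Bg by rewrite /Bg ltr_wpDl.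
have he2 : 0 < e / 2%:R by rewrite divr_gt0 ?ltr0n.
have he1 : 0 < e / 2%:R / Bg by rewrite divr_gt0.
have he2' : 0 < e / 2%:R / Bf by rewrite divr_gt0.
have [e2 he2p [e21 e22]] := pos_min ltr01 he2'.
have [d1 hd1 Hf] := cf _ he1; have [d2 hd2 Hg] := cg _ he2p.
have [d hd [l1 l2]] := pos_min hd1 hd2.
exists d => // x hx.
have hfx : `|f x - f t| < e / 2%:R / Bg by apply: Hf => v; apply: lt_le_trans (hx v) l1.
have hgx : `|g x - g t| < e2 by apply: Hg => v; apply: lt_le_trans (hx v) l2.
have hgxB : `|g x| <= Bg.
  have -> : g x = (g x - g t) + g t by ring.
  apply: le_trans (ler_normD _ _) _; rewrite /Bg addrC lerD2l.
  exact: ltW (lt_le_trans hgx e21).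
have -> : f x * g x - f t * g t = (f x - f t) * g x + f t * (g x - g t) by ring.
apply: le_lt_trans (ler_normD _ _) _; rewrite [e]splitr; apply: ltrD.
  rewrite normrM; apply: le_lt_trans (ler_wpM2l (normr_ge0 _) hgxB) _.
  by rewrite -(divfK (lt0r_neq0 hBg) (e / 2%:R)) ltr_pM2r.
rewrite normrM.
have hft : `|f t| <= Bf by rewrite /Bf lerDl ler01.
apply: le_lt_trans (ler_wpM2r (normr_ge0 _) hft) _.
rewrite -(divfK (lt0r_neq0 hBf) (e / 2%:R)) [_ / Bf * Bf]mulrC ltr_pM2l //.
exact: lt_le_trans hgx e22.
Qed.

Lemma cont_ext {f g} : cont_at f -> f =1 g -> cont_at g.
Proof.
move=> cf h e he; have [d hd H] := cf e he; exists d => // x hx; rewrite -!h; exact: H.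
Qed.

Lemma cont_sum (I : Type) (r : seq I) (F : I -> (X -> C) -> C) :
  (forall i, cont_at (F i)) -> cont_at (fun x => \sum_(i <- r) F i x).
Proof.
move=> hF; elim: r => [|i r IH].
  by apply: (cont_ext (cont_const 0)) => x; rewrite big_nil.
by apply: (cont_ext (cont_add (hF i) IH)) => x; rewrite big_cons.
Qed.

Lemma cont_prod (I : Type) (r : seq I) (F : I -> (X -> C) -> C) :
  (forall i, cont_at (F i)) -> cont_at (fun x => \prod_(i <- r) F i x).
Proof.
move=> hF; elim: r => [|i r IH].
  by apply: (cont_ext (cont_const 1)) => x; rewrite big_nil.
by apply: (cont_ext (cont_mul (hF i) IH)) => x; rewrite big_cons.
Qed.

Lemma cont_exp f k : cont_at f -> cont_at (fun x => f x ^+ k).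
Proof.
move=> hf; elim: k => [|k IH].
  by apply: (cont_ext (cont_const 1)) => x; rewrite expr0.
by apply: (cont_ext (cont_mul hf IH)) => x; rewrite exprS.
Qed.
End Cont.

Section Rep.
Variable C : fieldType.
Variable W : finType.

Definition monw (f : W -> nat) (w : W -> C) := \prod_v w v ^+ f v.

Definition Rep (K : nat) (h : (W -> C) -> C) :=
  exists l : seq (C * {ffun W -> nat}),
    (forall p, p \in l -> forall v, (p.2 v < K)%N) /\
    forall w, h w = \sum_(p <- l) p.1 * monw p.2 w.

Lemma Rep_ext {K h h'} : Rep K h -> h =1 h' -> Rep K h'.
Proof. by move=> [l [hl E]] e; exists l; split=> // w; rewrite -e. Qed.

Lemma Rep_weak {K K' h} : (K <= K')%N -> Rep K h -> Rep K' h.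
Proof.
move=> le [l [hl E]]; exists l; split=> // p pl v.
exact: leq_trans (hl p pl v) le.
Qed.

Lemma Rep_const a : Rep 1 (fun _ => a).
Proof.
exists [:: (a, [ffun => 0%N])]; split.
  by move=> p; rewrite inE => /eqP -> v; rewrite ffunE.
move=> w; rewrite big_cons big_nil addr0 /monw /=.
by rewrite big1 ?mulr1 // => v _; rewrite ffunE expr0.
Qed.

Lemma Rep_var v : Rep 2 (fun w => w v).
Proof.
exists [:: (1, [ffun v' => nat_of_bool (v' == v)])]; split.
  by move=> p; rewrite inE => /eqP -> v'; rewrite ffunE; case: (v' == v).
move=> w; rewrite big_cons big_nil addr0 /monw /= mul1r.
rewrite (bigD1 v) //= ffunE eqxx expr1 big1 ?mulr1 // => v' hv.
by rewrite ffunE (negbTE hv) expr0.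
Qed.

Lemma Rep_add {K h1 h2} : Rep K h1 -> Rep K h2 -> Rep K (fun w => h1 w + h2 w).
Proof.
move=> [l1 [b1 E1]] [l2 [b2 E2]]; exists (l1 ++ l2); split.
  by move=> p; rewrite mem_cat => /orP[/b1|/b2].
by move=> w; rewrite big_cat E1 E2.
Qed.

Definition addf (f g : {ffun W -> nat}) : {ffun W -> nat} := [ffun v => (f v + g v)%N].

Lemma monw_add f g w : monw (addf f g) w = monw f w * monw g w.
Proof. by rewrite /monw -big_split; apply: eq_bigr => v _; rewrite ffunE exprD. Qed.

Lemma Rep_mul {K1 K2 h1 h2} : Rep K1.+1 h1 -> Rep K2.+1 h2 ->
  Rep (K1 + K2).+1 (fun w => h1 w * h2 w).
Proof.
move=> [l1 [b1 E1]] [l2 [b2 E2]].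
exists [seq (p.1 * q.1, addf p.2 q.2) | p <- l1, q <- l2]; split.
  move=> x /allpairsP [[p q] [/= pl ql ->]] v /=; rewrite ffunE.
  by rewrite ltnS; apply: leq_add; rewrite -ltnS; [exact: b1 | exact: b2].
move=> w; rewrite E1 E2 big_distrl /=.
elim: l1 {b1 E1} => [|p l1 IH]; first by rewrite !big_nil.
rewrite allpairs_cons big_cat big_cons /= IH big_map; congr (_ + _).
rewrite mulr_sumr; apply: eq_bigr => q _; rewrite monw_add; rewrite /=; ring.
Qed.

Lemma Rep_sum (I : Type) (r : seq I) (F : I -> (W -> C) -> C) K :
  (forall i, Rep K.+1 (F i)) -> Rep K.+1 (fun w => \sum_(i <- r) F i w).
Proof.
move=> hF; elim: r => [|i r IH].
  apply: (Rep_ext (Rep_weak _ (Rep_const 0))) => // w; by rewrite big_nil.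
by apply: (Rep_ext (Rep_add (hF i) IH)) => w; rewrite big_cons.
Qed.

Lemma Rep_prod (I : Type) (r : seq I) (F : I -> (W -> C) -> C) a :
  (forall i, Rep a.+1 (F i)) -> Rep (a * size r).+1 (fun w => \prod_(i <- r) F i w).
Proof.
move=> hF; elim: r => [|i r IH].
  apply: (Rep_ext (Rep_weak _ (Rep_const 1))) => // w; by rewrite big_nil.
apply: (Rep_ext (Rep_weak _ (Rep_mul (hF i) IH))) => [|w]; last by rewrite big_cons.
by rewrite /= mulnS.
Qed.

Lemma Rep_exp f a k : Rep a.+1 f -> Rep (a * k).+1 (fun w => f w ^+ k).
Proof.
move=> hf; elim: k => [|k IH].
  apply: (Rep_ext (Rep_weak _ (Rep_const 1))) => // w; by rewrite expr0.
apply: (Rep_ext (Rep_weak _ (Rep_mul IH hf))) => [|w]; last by rewrite exprS mulrC.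
by rewrite mulnS addnC.
Qed.
End Rep.
Arguments monw {C W}.
Arguments Rep {C W}.
Arguments Rep_ext {C W K h h'}.
Arguments Rep_weak {C W K K' h}.
Arguments Rep_const {C W}.
Arguments Rep_var {C W}.
Arguments Rep_add {C W K h1 h2}.
Arguments Rep_mul {C W K1 K2 h1 h2}.
Arguments Rep_sum {C W I}.
Arguments Rep_prod {C W I}.
Arguments Rep_exp {C W}.


Section Count.
Variable C : fieldType.

Lemma kernel_exists (E F : finType) (kap : E -> F -> C) : (#|F| < #|E|)%N ->
  exists c : E -> C, (exists e, c e != 0) /\ forall f, \sum_e c e * kap e f = 0.
Proof.
move=> hlt.
pose A : 'M[C]_(#|E|, #|F|) := \matrix_(i, j) kap (enum_val i) (enum_val j).
have : kermx A != 0.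
  rewrite -mxrank_eq0 mxrank_ker subn_eq0 -ltnNge.
  exact: leq_ltn_trans (rank_leq_col A) hlt.
move=> /matrix0Pn [i [j hij]].
exists (fun e => kermx A i (enum_rank e)); split.
  by exists (enum_val j); rewrite enum_valK.
move=> f.
have := congr1 (fun M : 'M[C]_(#|E|, #|F|) => M i (enum_rank f)) (mulmx_ker A).
rewrite /= !mxE => h; rewrite -[RHS]h.
rewrite (reindex (fun i : 'I_#|E| => enum_val i)) /=; last first.
  by exists enum_rank => x _; [rewrite enum_valK | rewrite enum_rankK].
by apply: eq_bigr => x _; rewrite enum_valK [A _ _]mxE enum_rankK.
Qed.
End Count.

Section Ann.
Variable C : fieldType.
Variables W Q : finType.

Definition monq {k : nat} (e : {ffun Q -> 'I_k}) (x : Q -> C) := \prod_q x q ^+ e q.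

Definition fv {k} (f : {ffun W -> 'I_k}) : {ffun W -> nat} := [ffun v => (f v : nat)].

Lemma ffeq (f g : {ffun W -> nat}) : (forall v, f v = g v) -> f = g.
Proof. by move=> h; apply/ffunP. Qed.

Lemma rep_to_coef (k : nat) (l : seq (C * {ffun W -> nat})) w :
  (forall p, p \in l -> forall v, (p.2 v < k.+1)%N) ->
  \sum_(p <- l) p.1 * monw p.2 w =
  \sum_(f : {ffun W -> 'I_k.+1}) (\sum_(p <- l | p.2 == fv f) p.1) * monw (fv f) w.
Proof.
move=> hl.
under [RHS]eq_bigr => f _ do rewrite big_distrl /=.
rewrite (exchange_big_dep xpredT) //= big_seq [RHS]big_seq.
apply: eq_bigr => p pl.
rewrite (big_pred1 [ffun v => inord (p.2 v)]) /=.
  rewrite /fv; congr (_ * monw _ _).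
congr fun_of_fin; apply: ffeq => v; rewrite !ffunE inordK //.
  exact: hl.
move=> f /=; apply/eqP/eqP => [e|->].
  apply/ffunP => v; apply: val_inj; rewrite /= ffunE e ffunE inordK //; exact: hl.
apply: ffeq => v; rewrite !ffunE inordK //; exact: hl.
Qed.

Lemma annihilator (psi : (W -> C) -> Q -> C) s k :
  (forall e : {ffun Q -> 'I_s.+1}, Rep k.+1 (fun w => monq e (psi w))) ->
  (k.+1 ^ #|W| < s.+1 ^ #|Q|)%N ->
  exists c : {ffun Q -> 'I_s.+1} -> C,
    (exists e, c e != 0) /\ forall w, \sum_e c e * monq e (psi w) = 0.
Proof.
move=> hR hlt.
have [l hl] := fin_all_exists hR.
pose kap (e : {ffun Q -> 'I_s.+1}) (f : {ffun W -> 'I_k.+1}) :=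
  \sum_(p <- l e | p.2 == fv f) p.1.
have hlt' : (#|{ffun W -> 'I_k.+1}| < #|{ffun Q -> 'I_s.+1}|)%N.
  by rewrite !card_ffun !card_ord.
have [c [hc0 hc]] := @kernel_exists C _ _ kap hlt'.
exists c; split => // w.
under eq_bigr => e _ do rewrite (proj2 (hl e)) (@rep_to_coef k _ _ (proj1 (hl e))) big_distrr /=.
rewrite exchange_big /= big1 // => f _.
apply: (@etrans _ _ ((\sum_e c e * kap e f) * monw (fv f) w)); last by rewrite hc mul0r.
by rewrite big_distrl; apply: eq_bigr => e _; rewrite mulrA.
Qed.
End Ann.

Section Dig.
Local Open Scope nat_scope.


Lemma digits_inj b N (d d' : 'I_N -> nat) : 0 < b ->
  (forall i, d i < b) -> (forall i, d' i < b) ->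
  \sum_(i < N) d i * b ^ i = \sum_(i < N) d' i * b ^ i -> d =1 d'.
Proof.
move=> hb; elim: N d d' => [|N IH] d d' hd hd' E i; first by case: i.
move: E; rewrite !big_ord_recl /= !expn0 !muln1.
have b0 : forall j, bump 0 j = j.+1 by [].
under eq_bigr => j _ do rewrite b0 expnS mulnCA.
under [X in _ = _ + X]eq_bigr => j _ do rewrite b0 expnS mulnCA.
rewrite -!big_distrr /= => E.
have e0 : d ord0 = d' ord0.
  have := congr1 (modn^~ b) E => /=.
  rewrite addnC [d' ord0 + _]addnC [b * _]mulnC [b * _]mulnC !modnMDl !modn_small //.
have e1 : \sum_(j < N) d (lift ord0 j) * b ^ j = \sum_(j < N) d' (lift ord0 j) * b ^ j.
  have := congr1 (divn^~ b) E => /=.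
  rewrite addnC [d' ord0 + _]addnC [b * _]mulnC [b * _]mulnC !divnMDl // !divn_small //.
  by rewrite !addn0.
have := IH _ _ (fun j => hd _) (fun j => hd' _) e1.
case: (unliftP ord0 i) => [j ->|->] //; exact.
Qed.

End Dig.

Arguments monq {C Q k}.

Section NV.
Variable C : numClosedFieldType.
Variable Q : finType.
Variable s : nat.

Definition code (e : {ffun Q -> 'I_s.+1}) : nat :=
  (\sum_(i < #|Q|) (e (enum_val i) : nat) * s.+1 ^ i)%N.

Lemma code_inj : injective code.
Proof.
move=> e e' E; apply/ffunP => q; apply: val_inj.
have h := @digits_inj s.+1 #|Q| (fun i => e (enum_val i)) (fun i => e' (enum_val i)) (ltn0Sn s) (fun i => ltn_ord (e (enum_val i)))
   (fun i => ltn_ord (e' (enum_val i))) E (enum_rank q).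
by rewrite /= enum_rankK in h.
Qed.

Lemma monq_kron (e : {ffun Q -> 'I_s.+1}) (y : C) :
  monq e (fun q => y ^+ (s.+1 ^ enum_rank q)) = y ^+ code e.
Proof.
rewrite /monq.
under eq_bigr => q _ do rewrite -exprM.
rewrite prodrXr; congr (_ ^+ _).
rewrite (reindex (fun i : 'I_#|Q| => enum_val i)) /=; last first.
  by exists enum_rank => x _; [rewrite enum_valK | rewrite enum_rankK].
by apply: eq_bigr => i _; rewrite enum_valK mulnC.
Qed.

Lemma exists_nonroot (p : {poly C}) : p != 0 -> exists y, p.[y] != 0.
Proof.
move=> pn0; pose rs := [seq (i%:R : C) | i <- iota 0 (size p)].
case: (boolP (all (root p) rs)) => [hall|/allPn [y _ hy]]; last by exists y; rewrite -rootE.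
have := max_poly_roots pn0 hall.
rewrite map_inj_uniq ?iota_uniq ?size_map ?size_iota ?ltnn //.
  by move=> h; have := h isT.
by move=> a b /eqP; rewrite eqr_nat => /eqP.
Qed.

Lemma nonvanish (c : {ffun Q -> 'I_s.+1} -> C) : (exists e, c e != 0) ->
  exists x : Q -> C, \sum_e c e * monq e x != 0.
Proof.
move=> [e0 he0].
pose p : {poly C} := \sum_e c e *: 'X^(code e).
have pn0 : p != 0.
  apply/eqP => /(congr1 (fun q : {poly C} => q`_(code e0))).
  rewrite coef0 coef_sum (bigD1 e0) //= coefZ coefXn eqxx mulr1 big1 ?addr0.
    by move/eqP; rewrite (negbTE he0).
  move=> e ne; rewrite coefZ coefXn.
  case: eqP => [h|]; last by rewrite mulr0.
  by move/code_inj: h => h; move: ne; rewrite h eqxx.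
have [y hy] : exists y, p.[y] != 0.
  exact: exists_nonroot.
exists (fun q => y ^+ (s.+1 ^ enum_rank q)).
under eq_bigr => e _ do rewrite monq_kron.
move: hy; rewrite /p horner_sum.
suff -> : \sum_i (c i *: 'X^(code i)).[y] = \sum_e c e * y ^+ code e by [].
by apply: eq_bigr => e _; rewrite hornerZ hornerXn.
Qed.
End NV.

Arguments monq {C Q k}.
Arguments uvec {C N0 m}.
Arguments uvec_iso {C N0 m}.
Arguments slice_TM {C N0 Q}.
Arguments slice_MT {C N0 Q}.

Section Main.
Variable C : numClosedFieldType.
Variables N0 m : nat.
Hypothesis hm : (m + m <= N0)%N.
Hypothesis hm2 : (N0 <= (m + m).+1)%N.
Hypothesis hm13 : (13 <= m)%N.

Let Q : finType := ('I_m * 'I_m * 'I_m)%type.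
Let W : finType := ('I_3 * ('I_N0 * 'I_m))%type.
Let i0 : 'I_3 := @Ordinal 3 0 isT.
Let i1 : 'I_3 := @Ordinal 3 1 isT.
Let i2 : 'I_3 := @Ordinal 3 2 isT.

Definition psi (w : W -> C) (q : Q) : C :=
  \sum_(r < N0) w (i0, (r, q.1.1)) * w (i1, (r, q.1.2)) * w (i2, (r, q.2)).

Lemma Rep_psi q : Rep 4 (fun w => psi w q).
Proof.
apply: Rep_sum => r.
have h := (Rep_mul (Rep_mul (Rep_var (C:=C) (i0,(r,q.1.1))) (Rep_var (C:=C) (i1,(r,q.1.2)))) (Rep_var (C:=C) (i2,(r,q.2)))).
exact: (Rep_weak _ h).
Qed.

Let s := (3 * #|Q|)%N.

Lemma Rep_mon (e : {ffun Q -> 'I_s.+1}) :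
  Rep (3 * s * #|Q|).+1 (fun w => monq e (psi w)).
Proof.
have hsz : size (index_enum Q) = #|Q|.
  by rewrite cardT -deprecated_filter_index_enum filter_predT.
rewrite -hsz; apply: Rep_prod => q.
have h := Rep_exp _ 3 (e q) (Rep_psi q).
apply: Rep_weak _ h.
by rewrite ltnS leq_mul2l /= -ltnS ltn_ord.
Qed.

Lemma count_ineq : ((3 * s * #|Q|).+1 ^ #|W| < s.+1 ^ #|Q|)%N.
Proof.
rewrite /s !card_prod !card_ord.
set N := (m * m * m)%N.
have hN : (6 * (N0 * m) < N)%N.
  rewrite /N; nia.
apply: (@leq_ltn_trans (((3 * N).+1 ^ 2) ^ (3 * (N0 * m)))).
  rewrite leq_exp2r; last by rewrite muln_gt0 /=; nia.
  nia.
rewrite -expnM ltn_exp2l; last by nia.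
nia.
Qed.


Definition Tens (t : Q -> C) : tensor C N0 := fun i j k =>
  \sum_(q : Q) t q * uvec q.1.1 i * uvec q.1.2 j * uvec q.2 k.

Let hmN : (m <= N0)%N. Proof. by apply: leq_trans hm; apply: leq_addr. Qed.
Let wid (a : 'I_m) : 'I_N0 := widen_ord hmN a.

Lemma uvec_wid (a b : 'I_m) : uvec (C:=C) b (wid a) = (a == b)%:R.
Proof.
rewrite /uvec /=.
have -> : ((a : nat) == m + b) = false.
  by apply/negbTE/eqP => e; have := ltn_ord a; rewrite e; lia.
by rewrite mulr0 addr0.
Qed.

Lemma Tens_corner t (q : Q) : Tens t (wid q.1.1) (wid q.1.2) (wid q.2) = t q.
Proof.
rewrite /Tens (bigD1 q) //= !uvec_wid !eqxx !mulr1 big1 ?addr0 // => q' hq'.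
rewrite !uvec_wid.
case: q hq' => [[a b] c]; case: q' => [[a' b'] c'] /= hne.
case: eqP => [ea|_]; last by rewrite !mulr0 !mul0r.
case: eqP => [eb|_]; last by rewrite !mulr0 !mul0r.
case: eqP => [ec|_]; last by rewrite !mulr0.
by move: hne; rewrite ea eb ec eqxx.
Qed.

Lemma OT_corner (T' : tensor C N0) : OT T' ->
  exists w : W -> C, forall q : Q, T' (wid q.1.1) (wid q.1.2) (wid q.2) = psi w q.
Proof.
move=> [A [B [D [alpha [_ _ _ hT]]]]].
exists (fun x : W => if (x.1 : nat) == 0%N then alpha x.2.1 * A x.2.1 (wid x.2.2)
  else if (x.1 : nat) == 1%N then B x.2.1 (wid x.2.2) else D x.2.1 (wid x.2.2)).
move=> q; rewrite hT /psi; apply: eq_bigr => r _ /=; ring.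
Qed.


Lemma main_exists : exists t : Q -> C, ~ in_closure (@OT C N0) (Tens t).
Proof.
have [c [hc0 hc]] := @annihilator C W Q psi s (3 * s * #|Q|) Rep_mon count_ineq.
have [x hx] := @nonvanish C Q s c hc0.
exists x => hcl.
pose G := fun y : Q -> C => \sum_e c e * monq e y.
have cG : cont_at C Q x G.
  apply: cont_sum => e; apply: cont_mul; first exact: cont_const.
  apply: cont_prod => q; apply: cont_exp; exact: cont_proj.
have hGpos : 0 < `|G x| by rewrite normr_gt0.
have [d hd Hd] := cG _ hGpos.
have [T' [hT' hclose]] := hcl d hd.
have [w hw] := OT_corner T' hT'.
have := Hd (fun q => T' (wid q.1.1) (wid q.1.2) (wid q.2)).
have G0 : G (fun q => T' (wid q.1.1) (wid q.1.2) (wid q.2)) = 0.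
  rewrite /G; apply: (etrans _ (hc w)); apply: eq_bigr => e _; congr (_ * _); rewrite /monq.
  by apply: eq_bigr => q _; rewrite hw.
rewrite G0 sub0r normrN ltxx => H; apply: notF; apply: H => q.
by rewrite -(Tens_corner x q) distrC hclose.
Qed.

Lemma Tens_slices t :
  ((forall k l, (xslice (Tens t) k)^T *m xslice (Tens t) l = 0) /\
       (forall k l, xslice (Tens t) k *m (xslice (Tens t) l)^T = 0)) /\
      ((forall k l, (yslice (Tens t) k)^T *m yslice (Tens t) l = 0) /\
       (forall k l, yslice (Tens t) k *m (yslice (Tens t) l)^T = 0)) /\
      ((forall k l, (zslice (Tens t) k)^T *m zslice (Tens t) l = 0) /\
       (forall k l, zslice (Tens t) k *m (zslice (Tens t) l)^T = 0)).
Proof.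
have iso := uvec_iso (C:=C) hm.
have hx : forall k j l, xslice (Tens t) k j l = \sum_q t q * uvec q.1.1 k * uvec q.1.2 j * uvec q.2 l.
  by move=> k j l; rewrite mxE.
have hy : forall k j l, yslice (Tens t) k j l = \sum_q t q * uvec q.1.2 k * uvec q.1.1 j * uvec q.2 l.
  by move=> k j l; rewrite mxE; apply: eq_bigr => q _; ring.
have hz : forall k j l, zslice (Tens t) k j l = \sum_q t q * uvec q.2 k * uvec q.1.1 j * uvec q.1.2 l.
  by move=> k j l; rewrite mxE; apply: eq_bigr => q _; ring.
split; [split|split; split].
- exact: slice_TM hx (fun q q' => iso _ _).
- exact: slice_MT hx (fun q q' => iso _ _).
- exact: slice_TM hy (fun q q' => iso _ _).
- exact: slice_MT hy (fun q q' => iso _ _).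
- exact: slice_TM hz (fun q q' => iso _ _).
- exact: slice_MT hz (fun q q' => iso _ _).
Qed.

End Main.

Lemma good_of (C : numClosedFieldType) n (M : 'I_n.+1 -> 'M[C]_n.+1) :
  (forall k l, (M k)^T *m M l = 0) -> (forall k l, M k *m (M l)^T = 0) ->
  good_slices M.
Proof.
move=> h1 h2; split; apply: good_zero => A /allpairsP [[k l] [_ _ ->]] /=.
  exact: h1.
exact: h2.
Qed.

Theorem theorem52 (C : numClosedFieldType) (HC : real_complete C) :
  exists N : nat, forall n : nat, (N <= n.+1)%N ->
    exists T : tensor C n.+1,
      ~ in_closure (@OT C n.+1) T /\
      good_slices (xslice T) /\ good_slices (yslice T) /\ good_slices (zslice T).
Proof.
exists 26%N => n hn.
set m := (n.+1)./2.
have hm : (m + m <= n.+1)%N by rewrite addnn -geq_half_double.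
have hm2 : (n.+1 <= (m + m).+1)%N by rewrite addnn -leq_half_double.
have hm13 : (13 <= m)%N by rewrite geq_half_double.
have [t ht] := @main_exists C n.+1 m hm hm2 hm13.
have [[x1 x2] [[y1 y2] [z1 z2]]] := @Tens_slices C n.+1 m hm t.
exists (Tens C n.+1 m t); split => //.
split; first exact: good_of.
by split; apply: good_of.
Qed.
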